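(* Let $\beta=(\pi_1,\pi_2)$ be a chainable pair of patterns which is redundant, and let $\beta'=(\pi_1*\pi_2)$ be the single-pattern architecture. Then (1) $\mathcal{B}^\beta=\Sigma^{\pi_1*\pi_2}=\mathcal{B}^{\beta'}$; (2) $\|\beta'\|_0=\|\pi_1*\pi_2\|_0<\|\pi_1\|_0+\|\pi_2\|_0=\|\beta\|_0$.
   Context: A pattern is a tuple $\pi=(a,b,c,d)$ of positive integers; $\mathbf{S}_\pi:=\mathbf{I}_a\otimes\mathbf{1}_{b\times c}\otimes\mathbf{I}_d\in\{0,1\}^{abd\times acd}$; $\|\pi\|_0:=abcd$. A $\pi$-factor is a complex $abd\times acd$ matrix with support in that of $\mathbf{S}_\pi$; $\Sigma^\pi$ is the set of $\pi$-factors. Patterns $\pi_1=(a_1,b_1,c_1,d_1),\pi_2=(a_2,b_2,c_2,d_2)$ are chainable if $a_1c_1/a_2=b_2d_2/d_1=:r(\pi_1,\pi_2)$ is an integer, $a_1\mid a_2$, $d_2\mid d_1$; then $\pi_1*\pi_2:=(a_1,b_1d_1/d_2,a_2c_2/a_1,d_2)$. The chainable pair is redundant if $r(\pi_1,\pi_2)\ge\min(b_1,c_2)$. For an architecture $\alpha=(\pi_\ell)_{\ell=1}^L$, $\mathcal{B}^\alpha:=\{\mathbf{X}_1\cdots\mathbf{X}_L:\mathbf{X}_\ell\in\Sigma^{\pi_\ell}\}$ and $\|\alpha\|_0:=\sum_\ell\|\pi_\ell\|_0$. *)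

(* Defs.v *)
From HB Require Import structures.
From mathcomp Require Import all_boot all_algebra.
From mathcomp Require Import complex reals.
Set Implicit Arguments. Unset Strict Implicit. Unset Printing Implicit Defensive.
Import GRing.Theory Num.Theory.
Local Open Scope ring_scope.

Record pattern := Pattern { pa : nat; pb : nat; pc : nat; pd : nat }.

Definition valid_pattern (p : pattern) : Prop :=
  (0 < pa p)%N /\ (0 < pb p)%N /\ (0 < pc p)%N /\ (0 < pd p)%N.

Definition pnorm0 (p : pattern) : nat := (pa p * pb p * pc p * pd p)%N.

(* Support of S_pi = I_a (x) 1_{b x c} (x) I_d  (abd x acd, Kronecker row-major
   indexing): entry (i,j) is 1 iff i %/ (b d) = j %/ (c d) and i %% d = j %% d. *)
Definition S_supp (p : pattern) (i j : nat) : bool :=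
  (i %/ (pb p * pd p) == j %/ (pc p * pd p))%N && (i %% pd p == j %% pd p)%N.

Definition is_factor (R : realType) (p : pattern) (m n : nat) (X : 'M[R[i]]_(m, n)) : Prop :=
  m = (pa p * pb p * pd p)%N /\ n = (pa p * pc p * pd p)%N /\
  forall (i : 'I_m) (j : 'I_n), ~~ S_supp p i j -> X i j = 0.

Definition chainable (p1 p2 : pattern) : Prop :=
  (pa p2 %| pa p1 * pc p1)%N /\ (pd p1 %| pb p2 * pd p2)%N /\
  ((pa p1 * pc p1) %/ pa p2 = (pb p2 * pd p2) %/ pd p1)%N /\
  (pa p1 %| pa p2)%N /\ (pd p2 %| pd p1)%N.

Definition rchain (p1 p2 : pattern) : nat := ((pa p1 * pc p1) %/ pa p2)%N.

Definition pstar (p1 p2 : pattern) : pattern :=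
  Pattern (pa p1) ((pb p1 * pd p1) %/ pd p2)%N ((pa p2 * pc p2) %/ pa p1)%N (pd p2).

Definition redundant (p1 p2 : pattern) : Prop :=
  (minn (pb p1) (pc p2) <= rchain p1 p2)%N.

Fixpoint inB (R : realType) (al : seq pattern) (m n : nat) (X : 'M[R[i]]_(m, n)) : Prop :=
  match al with
  | [::] => False
  | [:: p] => is_factor p X
  | p :: al' => exists (k : nat) (X1 : 'M[R[i]]_(m, k)) (Y : 'M[R[i]]_(k, n)),
                  is_factor p X1 /\ inB al' Y /\ X = X1 *m Y
  end.

Definition anorm0 (al : seq pattern) : nat := (\sum_(p <- al) pnorm0 p)%N.

(* Main.v *)
Require Import Defs.
From mathcomp Require Import all_boot all_algebra complex reals.
From mathcomp Require Import zify ring.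

Lemma ltE (x X y Y : nat) : (x < X -> y < Y -> x*Y+y < X*Y)%N.
Proof. move=> *; nia. Qed.

Lemma dmD (q x y : nat) : (y < q -> (x*q+y) %/ q = x)%N.
Proof. move=> h; rewrite divnMDl ?divn_small ?addn0 //; lia. Qed.
Lemma dmM (q x y : nat) : (y < q -> (x*q+y) %% q = y)%N.
Proof. move=> h; rewrite modnMDl modn_small //. Qed.

Section C4.
Variables (B C D al be ga de : nat).
Hypotheses (hb : (be < B)%N) (hc : (ga < C)%N) (hd : (de < D)%N).
Let x := (((al*B+be)*C+ga)*D+de)%N.
Lemma P1 : (x %/ (B*(C*D)) = al)%N.
Proof. rewrite /x (_ : _ + de = al*(B*(C*D)) + ((be*C+ga)*D+de))%N; last ring.
apply: dmD; rewrite mulnA; apply: ltE => //; exact: ltE. Qed.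
Lemma P2 : (x %/ (B*C*D) = al)%N.
Proof. by rewrite -mulnA P1. Qed.
Lemma P3 : (x %/ (C*D) = al*B+be)%N.
Proof. rewrite /x (_ : _ + de = (al*B+be)*(C*D) + (ga*D+de))%N; last ring.
apply: dmD; nia. Qed.
Lemma P4 : (x %% (C*D) = ga*D+de)%N.
Proof. rewrite /x (_ : _ + de = (al*B+be)*(C*D) + (ga*D+de))%N; last ring.
apply: dmM; nia. Qed.
Lemma P5 : (x %% D = de)%N.
Proof. exact: dmM. Qed.
Lemma P6 : ((x %/ (C*D)) %% B = be)%N.
Proof. by rewrite P3 dmM. Qed.
Lemma P8 : (x %/ D = (al*B+be)*C+ga)%N.
Proof. exact: dmD. Qed.
Lemma P7 : ((x %/ D) %% C = ga)%N.
Proof. by rewrite P8 dmM. Qed.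
End C4.

Lemma split2 (Q x q : nat) : (0 < q -> x < Q*q -> exists y z, y < Q /\ z < q /\ x = y*q+z)%N.
Proof. move=> q0 h; exists (x %/ q), (x %% q); split; first by rewrite ltn_divLR.
split; [exact: ltn_pmod | exact: divn_eq]. Qed.

Lemma split4 (x A B C D : nat) : (0 < B -> 0 < C -> 0 < D -> x < A*B*C*D ->
  exists al be ga de, al < A /\ be < B /\ ga < C /\ de < D /\ x = ((al*B+be)*C+ga)*D+de)%N.
Proof. move=> hB hC hD h.
have [x1 [de [h1 [hde ->]]]] := @split2 _ _ _ hD h.
have [x2 [ga [h2 [hga ->]]]] := @split2 _ _ _ hC h1.
have [al [be [h3 [hbe ->]]]] := @split2 _ _ _ hB h2.
by exists al, be, ga, de.
Qed.
Set Implicit Arguments.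

Lemma pairE (q x y x' y' : nat) : (y < q -> y' < q -> (x*q+y == x'*q+y') = (x == x') && (y == y'))%N.
Proof.
move=> h h'; apply/eqP/andP => [e|[/eqP -> /eqP ->] //]; split; apply/eqP.
  by rewrite -(@dmD q x y h) e dmD.
by rewrite -(@dmM q x y h) e dmM.
Qed.


Definition zat (R : realType) m n (X : 'M[R[i]]_(m,n)) (i : nat) (j : 'I_n) : R[i] :=
  match (insub i : option 'I_m) with Some i' => X i' j | None => 0%R end.
Arguments zat {R m n}.
Lemma zatE (R : realType) m n (X : 'M[R[i]]_(m,n)) (i : 'I_m) j : zat X i j = X i j.
Proof. by rewrite /zat valK. Qed.
Definition zatc (R : realType) m n (X : 'M[R[i]]_(m,n)) (i : 'I_m) (j : nat) : R[i] :=
  match (insub j : option 'I_n) with Some j' => X i j' | None => 0%R end.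
Arguments zatc {R m n}.
Lemma zatcE (R : realType) m n (X : 'M[R[i]]_(m,n)) i (j : 'I_n) : zatc X i j = X i j.
Proof. by rewrite /zatc valK. Qed.

Lemma lt5 A S R T D a b c d e : (a < A -> b < S -> c < R -> d < T -> e < D ->
  (((a*S+b)*R+c)*T+d)*D+e < A*S*R*T*D)%N.
Proof. move=> *; do 4 apply: ltE => //. Qed.

Section Par.
Variables (a1 b1 s r t d2 c2 : nat).
Hypotheses (ha : (0 < a1)%N) (hb : (0 < b1)%N) (hs : (0 < s)%N) (hr : (0 < r)%N)
  (ht : (0 < t)%N) (hd : (0 < d2)%N) (hc : (0 < c2)%N).
Let p1 := Pattern a1 b1 (s*r) (t*d2).
Let p2 := Pattern (a1*s) (r*t) c2 d2.
Let ps := Pattern a1 (b1*t) (s*c2) d2.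

Lemma coI (i N : nat) : (i < N -> N = a1*b1*t*d2 -> exists ai bi ti di,
  ai < a1 /\ bi < b1 /\ ti < t /\ di < d2 /\ i = ((ai*b1+bi)*t+ti)*d2+di)%N.
Proof. by move=> h e; apply: split4 => //; rewrite -e. Qed.
Lemma coJ (j N : nat) : (j < N -> N = a1*s*c2*d2 -> exists aj sj gj dj,
  aj < a1 /\ sj < s /\ gj < c2 /\ dj < d2 /\ j = ((aj*s+sj)*c2+gj)*d2+dj)%N.
Proof. by move=> h e; apply: split4 => //; rewrite -e. Qed.
Lemma coK (k N : nat) : (k < N -> N = a1*s*r*t*d2 -> exists ak sk rk tk dk,
  ak < a1 /\ sk < s /\ rk < r /\ tk < t /\ dk < d2 /\ k = (((ak*s+sk)*r+rk)*t+tk)*d2+dk)%N.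
Proof. move=> h e.
have [a' [rk [tk [dk [h1 [h2 [h3 [h4 ->]]]]]]]] := @split4 k (a1*s) r t d2 hr ht hd ltac:(by rewrite -e).
have [ak [sk [h5 [h6 ->]]]] := @split2 a1 a' s hs h1.
by exists ak, sk, rk, tk, dk.
Qed.

Lemma s1E ai bi ti di ak sk rk tk dk : (bi < b1 -> ti < t -> di < d2 -> sk < s -> rk < r -> tk < t -> dk < d2 ->
  S_supp p1 (((ai*b1+bi)*t+ti)*d2+di) ((((ak*s+sk)*r+rk)*t+tk)*d2+dk) =
  [&& ai == ak, ti == tk & di == dk])%N.
Proof.
move=> *; rewrite /S_supp /= P1 // P4 //.
rewrite (_ : ((((ak*s+sk)*r+rk)*t+tk)*d2+dk) = ((ak*(s*r)+(sk*r+rk))*t+tk)*d2+dk)%N; last ring.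
rewrite P1 // ?P4 // ?pairE //; try nia.
Qed.


Lemma s2E aj sj gj dj ak sk rk tk dk : (sj < s -> gj < c2 -> dj < d2 -> sk < s -> rk < r -> tk < t -> dk < d2 ->
  S_supp p2 ((((ak*s+sk)*r+rk)*t+tk)*d2+dk) (((aj*s+sj)*c2+gj)*d2+dj) =
  [&& ak == aj, sk == sj & dk == dj])%N.
Proof.
move=> *; rewrite /S_supp /= P2 // P5 // P3 // P5 // pairE //.
by rewrite andbA.
Qed.

Lemma spsE ai bi ti di aj sj gj dj : (bi < b1 -> ti < t -> di < d2 -> sj < s -> gj < c2 -> dj < d2 ->
  S_supp ps (((ai*b1+bi)*t+ti)*d2+di) (((aj*s+sj)*c2+gj)*d2+dj) =
  (ai == aj) && (di == dj))%N.
Proof. by move=> *; rewrite /S_supp /= !P2 // !P5. Qed.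

Definition rho k := ((k %/ (t*d2)) %% r)%N.
Definition beta i := ((i %/ (t*d2)) %% b1)%N.
Definition gam j := ((j %/ d2) %% c2)%N.
Definition ip k := ((k %/ (s*r*(t*d2)) * b1 + rho k) * (t*d2) + k %% (t*d2))%N.
Definition jp k := ((k %/ (r*t*d2) * c2 + rho k) * d2 + k %% d2)%N.

Lemma rhoE ak sk rk tk dk : (rk < r -> tk < t -> dk < d2 ->
  rho ((((ak*s+sk)*r+rk)*t+tk)*d2+dk) = rk)%N.
Proof. by move=> *; rewrite /rho P6. Qed.
Lemma betaE ai bi ti di : (bi < b1 -> ti < t -> di < d2 ->
  beta (((ai*b1+bi)*t+ti)*d2+di) = bi)%N.
Proof. by move=> *; rewrite /beta P6. Qed.
Lemma gamE aj sj gj dj : (gj < c2 -> dj < d2 ->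
  gam (((aj*s+sj)*c2+gj)*d2+dj) = gj)%N.
Proof. by move=> *; rewrite /gam P7. Qed.
Lemma ipE ak sk rk tk dk : (sk < s -> rk < r -> tk < t -> dk < d2 ->
  ip ((((ak*s+sk)*r+rk)*t+tk)*d2+dk) = ((ak*b1+rk)*t+tk)*d2+dk)%N.
Proof.
move=> *; rewrite /ip rhoE // P4 //.
rewrite (_ : ((((ak*s+sk)*r+rk)*t+tk)*d2+dk) = ((ak*(s*r)+(sk*r+rk))*t+tk)*d2+dk)%N; last ring.
rewrite P1 //; try nia; try ring.
Qed.
Lemma jpE ak sk rk tk dk : (rk < r -> tk < t -> dk < d2 ->
  jp ((((ak*s+sk)*r+rk)*t+tk)*d2+dk) = ((ak*s+sk)*c2+rk)*d2+dk)%N.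
Proof. by move=> *; rewrite /jp rhoE // P2 // P5. Qed.

Lemma fwd (R : realType) m k n (X1 : 'M[R[i]]_(m,k)) (Y : 'M[R[i]]_(k,n)) :
  is_factor p1 X1 -> is_factor p2 Y -> is_factor ps (X1 *m Y).
Proof.
move=> [hm [hk hX]] [hk' [hn hY]]; split; first by rewrite hm /p1 /ps /=; ring.
split; first by rewrite hn /p2 /ps /=; ring.
move=> i j.
have [ai [bi [ti [di [hai [hbi [hti [hdi Ei]]]]]]]] := @coI _ _ (ltn_ord i) ltac:(by rewrite hm /p1 /=; ring).
have [aj [sj [gj [dj [haj [hsj [hgj [hdj Ej]]]]]]]] := @coJ _ _ (ltn_ord j) ltac:(by rewrite hn /p2 /=; ring).
rewrite !mxE => hns; apply: big1 => kk _.
have [ak [sk [rk [tk [dk [hak [hsk [hrk [htk [hdk Ek]]]]]]]]]] := @coK _ _ (ltn_ord kk) ltac:(by rewrite hk /p1 /=; ring).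
case e1: (S_supp p1 i kk); last by rewrite hX ?e1 // GRing.mul0r.
case e2: (S_supp p2 kk j); last by rewrite (hY kk j) ?e2 // GRing.mulr0.
exfalso; move: e1 e2 hns; rewrite Ei Ek Ej s1E // s2E // spsE //.
by move=> /and3P[/eqP -> _ /eqP ->] /and3P[/eqP -> _ /eqP ->]; rewrite !eqxx.
Qed.

Lemma bwdA (R : realType) m n (X : 'M[R[i]]_(m,n)) : (b1 <= r)%N -> is_factor ps X ->
  exists k (X1 : 'M[R[i]]_(m,k)) (Y : 'M[R[i]]_(k,n)),
    is_factor p1 X1 /\ is_factor p2 Y /\ X = (X1 *m Y)%R.
Proof.
move=> hbr [hm [hn hX]].
exists (a1*(s*r)*(t*d2))%N.
exists (\matrix_(i < m, k < a1*(s*r)*(t*d2)) (if S_supp p1 i k && (rho k == beta i) then 1 else 0))%R.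
exists (\matrix_(k < a1*(s*r)*(t*d2), j < n) (if S_supp p2 k j && (rho k < b1)%N then zat X (ip k) j else 0))%R.
split. split; first by rewrite hm /p1 /ps /=; ring. split=>//. by move=> i k; rewrite mxE; case: S_supp.
split. split. by rewrite /p2 /=; ring. split. by rewrite hn /p2 /ps /=; ring. by move=> k j; rewrite mxE; case: S_supp.
apply/matrixP=> i j; rewrite !mxE.
under eq_bigr => kk _ do rewrite !mxE.
have [ai [bi [ti [di [hai [hbi [hti [hdi Ei]]]]]]]] := @coI _ _ (ltn_ord i) ltac:(by rewrite hm /ps /=; ring).
have [aj [sj [gj [dj [haj [hsj [hgj [hdj Ej]]]]]]]] := @coJ _ _ (ltn_ord j) ltac:(by rewrite hn /ps /=; ring).
have key : forall kk : 'I_(a1*(s*r)*(t*d2)), S_supp p1 i kk && (rho kk == beta i) ->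
   S_supp p2 kk j && (rho kk < b1)%N -> (ip kk = i /\ forall k0, 
   k0 = (((ai*s+sj)*r+bi)*t+ti)*d2+di -> nat_of_ord kk = k0)%N.
  move=> kk.
  have [ak [sk [rk [tk [dk [hak [hsk [hrk [htk [hdk Ek]]]]]]]]]] := @coK _ _ (ltn_ord kk) ltac:(by rewrite /=; ring).
  rewrite Ei Ek Ej s1E // s2E // rhoE // betaE //.
  move=> /andP[/and3P[/eqP ? /eqP ? /eqP ?] /eqP ?] /andP[/and3P[/eqP ? /eqP ? /eqP ?] _]; subst.
  by split; [rewrite ipE | move=> k0 ->].
case hS: (S_supp ps i j).
  have /andP[/eqP ea /eqP ed] : (ai == aj) && (di == dj) by rewrite -(@spsE ai bi ti di aj sj gj dj) // -Ei -Ej.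
  have hk0 : ((((ai*s+sj)*r+bi)*t+ti)*d2+di < a1*(s*r)*(t*d2))%N.
    rewrite (_ : a1*(s*r)*(t*d2) = a1*s*r*t*d2)%N; last ring.
    apply: lt5 => //; exact: leq_trans hbi hbr.
  have hbr' : (bi < r)%N := leq_trans hbi hbr.
  rewrite (bigD1 (Ordinal hk0)) //= big1 => [|kk hkk].
    have q1 : S_supp p1 i (Ordinal hk0) && (rho (Ordinal hk0) == beta i).
      by rewrite /= Ei s1E // ?rhoE // ?betaE // !eqxx.
    have q2 : S_supp p2 (Ordinal hk0) j && (rho (Ordinal hk0) < b1)%N.
      by rewrite /= Ej s2E // ?rhoE // ea ed !eqxx.
    have [e1 _] := key (Ordinal hk0) q1 q2.
    by rewrite q1 q2 /= e1 zatE GRing.mul1r GRing.addr0.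
  case q1: (S_supp p1 i kk && (rho kk == beta i)); last by rewrite GRing.mul0r.
  case q2: (S_supp p2 kk j && (rho kk < b1)%N); last by rewrite GRing.mulr0.
  have [_ e2] := key kk q1 q2.
  by move/eqP: hkk; case; apply: val_inj => /=; apply: e2.
rewrite hX ?hS //; symmetry; apply: big1 => kk _.
case q1: (S_supp p1 i kk && (rho kk == beta i)); last by rewrite GRing.mul0r.
case q2: (S_supp p2 kk j && (rho kk < b1)%N); last by rewrite GRing.mulr0.
have [e1 _] := key kk q1 q2.
by rewrite e1 zatE hX ?hS // GRing.mulr0.
Qed.

Lemma bwdB (R : realType) m n (X : 'M[R[i]]_(m,n)) : (c2 <= r)%N -> is_factor ps X ->
  exists k (X1 : 'M[R[i]]_(m,k)) (Y : 'M[R[i]]_(k,n)),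
    is_factor p1 X1 /\ is_factor p2 Y /\ X = (X1 *m Y)%R.
Proof.
move=> hcr [hm [hn hX]].
exists (a1*(s*r)*(t*d2))%N.
exists (\matrix_(i < m, k < a1*(s*r)*(t*d2)) (if S_supp p1 i k && (rho k < c2)%N then zatc X i (jp k) else 0))%R.
exists (\matrix_(k < a1*(s*r)*(t*d2), j < n) (if S_supp p2 k j && (rho k == gam j) then 1 else 0))%R.
split. split; first by rewrite hm /p1 /ps /=; ring. split=>//. by move=> i k; rewrite mxE; case: S_supp.
split. split. by rewrite /p2 /=; ring. split. by rewrite hn /p2 /ps /=; ring. by move=> k j; rewrite mxE; case: S_supp.
apply/matrixP=> i j; rewrite !mxE.
under eq_bigr => kk _ do rewrite !mxE.
have [ai [bi [ti [di [hai [hbi [hti [hdi Ei]]]]]]]] := @coI _ _ (ltn_ord i) ltac:(by rewrite hm /ps /=; ring).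
have [aj [sj [gj [dj [haj [hsj [hgj [hdj Ej]]]]]]]] := @coJ _ _ (ltn_ord j) ltac:(by rewrite hn /ps /=; ring).
have key : forall kk : 'I_(a1*(s*r)*(t*d2)), S_supp p1 i kk && (rho kk < c2)%N ->
   S_supp p2 kk j && (rho kk == gam j) -> (jp kk = j /\ forall k0, 
   k0 = (((ai*s+sj)*r+gj)*t+ti)*d2+di -> nat_of_ord kk = k0)%N.
  move=> kk.
  have [ak [sk [rk [tk [dk [hak [hsk [hrk [htk [hdk Ek]]]]]]]]]] := @coK _ _ (ltn_ord kk) ltac:(by rewrite /=; ring).
  rewrite Ei Ek Ej s1E // s2E // rhoE // gamE //.
  move=> /andP[/and3P[/eqP ? /eqP ? /eqP ?] _] /andP[/and3P[/eqP ? /eqP ? /eqP ?] /eqP ?]; subst.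
  by split; [rewrite jpE | move=> k0 ->].
case hS: (S_supp ps i j).
  have /andP[/eqP ea /eqP ed] : (ai == aj) && (di == dj) by rewrite -(@spsE ai bi ti di aj sj gj dj) // -Ei -Ej.
  have hgr : (gj < r)%N := leq_trans hgj hcr.
  have hk0 : ((((ai*s+sj)*r+gj)*t+ti)*d2+di < a1*(s*r)*(t*d2))%N.
    rewrite (_ : a1*(s*r)*(t*d2) = a1*s*r*t*d2)%N; last ring.
    exact: lt5.
  rewrite (bigD1 (Ordinal hk0)) //= big1 => [|kk hkk].
    have q1 : S_supp p1 i (Ordinal hk0) && (rho (Ordinal hk0) < c2)%N.
      by rewrite /= Ei s1E // ?rhoE // !eqxx.
    have q2 : S_supp p2 (Ordinal hk0) j && (rho (Ordinal hk0) == gam j).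
      by rewrite /= Ej s2E // ?rhoE // ?gamE // ea ed !eqxx.
    have [e1 _] := key (Ordinal hk0) q1 q2.
    by rewrite q1 q2 /= e1 zatcE GRing.mulr1 GRing.addr0.
  case q1: (S_supp p1 i kk && (rho kk < c2)%N); last by rewrite GRing.mul0r.
  case q2: (S_supp p2 kk j && (rho kk == gam j)); last by rewrite GRing.mulr0.
  have [_ e2] := key kk q1 q2.
  by move/eqP: hkk; case; apply: val_inj => /=; apply: e2.
rewrite hX ?hS //; symmetry; apply: big1 => kk _.
case q1: (S_supp p1 i kk && (rho kk < c2)%N); last by rewrite GRing.mul0r.
case q2: (S_supp p2 kk j && (rho kk == gam j)); last by rewrite GRing.mulr0.
have [e1 _] := key kk q1 q2.
by rewrite e1 zatcE hX ?hS // GRing.mul0r.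
Qed.
End Par.

Theorem lemma4p14 (R : realType) (p1 p2 : pattern) :
  valid_pattern p1 -> valid_pattern p2 ->
  chainable p1 p2 -> redundant p1 p2 ->
  ((forall (m n : nat) (X : 'M[R[i]]_(m, n)),
       (inB [:: p1; p2] X <-> is_factor (pstar p1 p2) X) /\
       (is_factor (pstar p1 p2) X <-> inB [:: pstar p1 p2] X)) /\
   (anorm0 [:: pstar p1 p2] = pnorm0 (pstar p1 p2) /\
    (pnorm0 (pstar p1 p2) < pnorm0 p1 + pnorm0 p2)%N /\
    (pnorm0 p1 + pnorm0 p2)%N = anorm0 [:: p1; p2])).
Proof.
case: p1 p2 => a1 b1 c1 d1 [a2 b2 c2 d2].
rewrite /valid_pattern /chainable /redundant /rchain /=.
move=> [ha [hb [hc1 hd1]]] [ha2 [hb2 [hc hd]]] [h1 [h2 [h3 [/dvdnP [s es] /dvdnP [t et]]]]].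
subst a2 d1.
set r := (a1 * c1 %/ (s * a1))%N.
have ec1 : (a1 * c1 = r * (s * a1))%N by rewrite divnK.
have eb2 : (b2 * d2 = r * (t * d2))%N by rewrite /r h3 divnK.
have hs : (0 < s)%N by move: ha2; rewrite muln_gt0 => /andP[].
have ht : (0 < t)%N by move: hd1; rewrite muln_gt0 => /andP[].
have ec : c1 = (s * r)%N.
  apply/eqP; rewrite -(eqn_pmul2l ha); apply/eqP; rewrite ec1; ring.
have eb : b2 = (r * t)%N.
  apply/eqP; rewrite -(eqn_pmul2r hd); apply/eqP; rewrite eb2; ring.
have hr : (0 < r)%N by move: hc1; rewrite ec muln_gt0 => /andP[].
move: r ec1 eb2 h1 h2 h3 ec eb hr => r _ _ _ _ _ -> -> hr.
rewrite (_ : s * a1 = a1 * s)%N; last ring.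
move=> hred.
have -> : pstar (Pattern a1 b1 (s * r) (t * d2)) (Pattern (a1 * s) (r * t) c2 d2)
   = Pattern a1 (b1 * t) (s * c2) d2.
  rewrite /pstar /=; congr Pattern.
    by rewrite mulnA mulnK.
  by rewrite -mulnA mulKn.
split.
  move=> m n X; split; last by [].
  rewrite /=; split.
    by move=> [k [X1 [Y [hX1 [hY ->]]]]]; apply: (fwd s r t ha hb hs hr ht hd hc).
  move=> hX; move: hred; rewrite geq_min => /orP[hbr|hcr].
    exact: (bwdA b1 s r t c2 ha hb hs hr ht hd hc).
  exact: (bwdB b1 s r t c2 ha hb hs hr ht hd hc).
rewrite /anorm0 !big_cons !big_nil /pnorm0 /= !addn0; split => //; split => //.
have hP : (0 < a1 * s * t * d2)%N by rewrite !muln_gt0 ha hs ht hd.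
rewrite (_ : a1 * (b1 * t) * (s * c2) * d2 = (a1 * s * t * d2) * (b1 * c2))%N; last ring.
rewrite (_ : a1 * b1 * (s * r) * (t * d2) + a1 * s * (r * t) * c2 * d2 = (a1 * s * t * d2) * (b1 * r + r * c2))%N; last ring.
rewrite ltn_pmul2l //.
move: hred; rewrite geq_min => /orP[hbr|hcr]; nia.
Qed.
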